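(* Let $0\leq \beta<1$ and $m \in \mathbb{N}$. Let $f(z)=z+\sum_{k=1}^{\infty} a_{mk+1}z^{mk+1}$ belong to $\Theta_{\Sigma_m}(1,1,0,0;\beta)$ (the case $\tau=\lambda=1$, $\gamma=\delta=0$). Then $$|a_{m+1}| \leq \min\left\{\frac{2(1-\beta)}{1+m},\ 2\sqrt{\frac{1-\beta}{(m+1)(1+2m)}}\right\}\quad\text{and}\quad |a_{2m+1}| \leq \frac{2(1-\beta)}{1+2m}.$$
   Context: Let $\mathbb{U}=\{z\in\mathbb{C}:|z|<1\}$ and $m\in\mathbb{N}$. $\mathcal{A}_m$ denotes the class of functions analytic in $\mathbb{U}$ of the form $f(z)=z+\sum_{k=1}^{\infty}a_{mk+1}z^{mk+1}$. $\Sigma_m$ denotes the class of $m$-fold symmetric bi-univalent functions: functions $f\in\mathcal{A}_m$ univalent in $\mathbb{U}$ whose inverse $f^{-1}$ extends to a univalent function $g$ on $\mathbb{U}$; this $g$ has the expansion $g(w)=w-a_{m+1}w^{m+1}+\left[(m+1)a_{m+1}^2-a_{2m+1}\right]w^{2m+1}-\cdots$. For $\delta\in\mathbb{N}_0$ and $h(z)=z+\sum_{k\ge1}c_{mk+1}z^{mk+1}$ analytic in $\mathbb{U}$, the $m$-fold Ruscheweyh derivative is $\mathcal{R}^\delta h(z)=z+\sum_{k=1}^{\infty}\frac{\Gamma(\delta+k+1)}{\Gamma(k+1)\Gamma(\delta+1)}c_{mk+1}z^{mk+1}$ (for $\delta=0$ it is the identity). For such $h$ and parameters $\lambda,\gamma,\tau\neq0,\delta$,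 put $$J_h(z)=1+\frac{1}{\tau}\Big[(1-\lambda)(1-\gamma)\frac{\mathcal{R}^\delta h(z)}{z}+(\lambda(\gamma+1)+\gamma)(\mathcal{R}^\delta h)'(z)+\lambda\gamma\big(z(\mathcal{R}^\delta h)''(z)-2\big)-1\Big].$$ For $0\le\beta<1$, $\Theta_{\Sigma_m}(\tau,\lambda,\gamma,\delta;\beta)$ is the set of $f\in\Sigma_m$ such that $\operatorname{Re}J_f(z)>\beta$ for all $z\in\mathbb{U}$ and $\operatorname{Re}J_g(w)>\beta$ for all $w\in\mathbb{U}$, where $g$ is the extension of $f^{-1}$ to $\mathbb{U}$. *)

(* Defs.v *)
From Stdlib Require Import Reals Arith Factorial.
From Coquelicot Require Import Coquelicot.

Open Scope R_scope.

Definition in_U (z : C) : Prop := Cmod z < 1.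

(* Total sum of a complex series (real and imaginary parts summed separately);
   it is the genuine sum whenever the series converges. *)
Definition CSeries (u : nat -> C) : C :=
  (Series (fun n => fst (u n)), Series (fun n => snd (u n))).

Definition has_expansion (h : C -> C) (c : nat -> C) : Prop :=
  forall z : C, in_U z -> is_series (fun n => (c n * z ^ n)%C) (h z).

Definition mfold_coeffs (m : nat) (c : nat -> C) : Prop :=
  c 1%nat = 1%C /\ forall n : nat, (forall k : nat, n <> (m * k + 1)%nat) -> c n = 0%C.

Definition in_A (m : nat) (h : C -> C) (c : nat -> C) : Prop :=
  mfold_coeffs m c /\ has_expansion h c.

Definition univalent_U (h : C -> C) : Prop :=
  forall z1 z2 : C, in_U z1 -> in_U z2 -> h z1 = h z2 -> z1 = z2.

Definition inverse_near0 (f g : C -> C) : Prop :=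
  exists r : R, 0 < r /\ forall w : C, Cmod w < r -> in_U (g w) /\ f (g w) = w.

(* m-fold Ruscheweyh multiplier Gamma(delta+k+1)/(Gamma(k+1)Gamma(delta+1))
   on the coefficient of index n = m k + 1. *)
Definition rusch_mult (m delta n : nat) : R :=
  let k := ((n - 1) / m)%nat in
  INR (fact (delta + k)) / (INR (fact k) * INR (fact delta)).

Definition rusch_coeffs (m delta : nat) (c : nat -> C) (n : nat) : C :=
  (RtoC (rusch_mult m delta n) * c n)%C.

(* J_h(z), with R^delta h(z)/z, (R^delta h)'(z) and z (R^delta h)''(z)
   computed as the (termwise) power series of R^delta h. *)
Definition J (m : nat) (tau lambda gamma : C) (delta : nat) (c : nat -> C) (z : C) : C :=
  let d := rusch_coeffs m delta c in
  let S0 := CSeries (fun n => d n * z ^ (n - 1))%C in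
  let S1 := CSeries (fun n => INR n * d n * z ^ (n - 1))%C in
  let S2 := CSeries (fun n => INR n * INR (n - 1) * d n * z ^ (n - 1))%C in
  (1 + / tau * ((1 - lambda) * (1 - gamma) * S0
                + (lambda * (gamma + 1) + gamma) * S1
                + lambda * gamma * (S2 - 2) - 1))%C.

(* f (with coefficients a) belongs to Theta_{Sigma_m}(tau,lambda,gamma,delta;beta):
   f in Sigma_m (f in A_m, univalent in U, f^{-1} extends to a univalent
   analytic g on U, given by its power series b), Re J_f > beta and Re J_g > beta. *)
Definition Theta (m : nat) (tau lambda gamma : C) (delta : nat) (beta : R)
    (f : C -> C) (a : nat -> C) : Prop :=
  in_A m f a /\ univalent_U f /\
  (forall z, in_U z -> beta < Re (J m tau lambda gamma delta a z)) /\
  exists (g : C -> C) (b : nat -> C),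
    has_expansion g b /\ univalent_U g /\ inverse_near0 f g /\
    (forall w, in_U w -> beta < Re (J m tau lambda gamma delta b w)).

(* Main.v *)
Require Import Defs.
From Stdlib Require Import Reals.
From Coquelicot Require Import Coquelicot.
From Stdlib Require Import Lra Lia Psatz Factorial.

Open Scope R_scope.


Lemma im_le_Cmod (c : C) : Rabs (Im c) <= Cmod c.
Proof.
  destruct c as [x y]. unfold Cmod, Im; simpl.
  rewrite <- sqrt_Rsqr_abs. apply sqrt_le_1_alt. unfold Rsqr. nra.
Qed.

Lemma Cmod_le_sum (z : C) : Cmod z <= Rabs (fst z) + Rabs (snd z).
Proof.
  destruct z as [x y]. unfold Cmod; simpl.
  rewrite <- (sqrt_Rsqr (Rabs x + Rabs y)) by (pose proof (Rabs_pos x); pose proof (Rabs_pos y); lra).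
  apply sqrt_le_1_alt. unfold Rsqr.
  pose proof (Rabs_pos x); pose proof (Rabs_pos y).
  assert (x * (x * 1) = Rabs x * Rabs x) by (rewrite Rmult_1_r, <- Rabs_mult; rewrite Rabs_pos_eq; nra).
  assert (y * (y * 1) = Rabs y * Rabs y) by (rewrite Rmult_1_r, <- Rabs_mult; rewrite Rabs_pos_eq; nra).
  nra.
Qed.

Lemma sum_n_fst (u : nat -> C) N : fst (sum_n u N) = sum_n (fun k => fst (u k)) N.
Proof. induction N. - rewrite !sum_O; reflexivity. - rewrite !sum_Sn, <- IHN. reflexivity. Qed.
Lemma sum_n_snd (u : nat -> C) N : snd (sum_n u N) = sum_n (fun k => snd (u k)) N.
Proof. induction N. - rewrite !sum_O; reflexivity. - rewrite !sum_Sn, <- IHN. reflexivity. Qed.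

Lemma ser_re (u : nat -> C) s : is_series u s ->
  is_series (fun k => fst (u k)) (fst s) /\ is_series (fun k => snd (u k)) (snd s).
Proof.
  unfold is_series. intros H. split.
  - intros P [eps HP].
    assert (Hl: locally s (fun y : C => P (fst y))).
    { exists eps. intros y [H1 H2]. apply HP. exact H1. }
    specialize (H _ Hl). unfold filtermap in *. revert H. apply filter_imp. intros N HN. rewrite <- sum_n_fst. exact HN.
  - intros P [eps HP].
    assert (Hl: locally s (fun y : C => P (snd y))).
    { exists eps. intros y [H1 H2]. apply HP. exact H2. }
    specialize (H _ Hl). unfold filtermap in *. revert H. apply filter_imp. intros N HN. rewrite <- sum_n_snd. exact HN.
Qed.

Lemma is_series_C_unique (u : nat -> C) s1 s2 : is_series u s1 -> is_series u s2 -> s1 = s2.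
Proof.
  intros H1 H2. destruct (ser_re _ _ H1) as [A1 B1]. destruct (ser_re _ _ H2) as [A2 B2].
  apply is_series_unique in A1. apply is_series_unique in A2.
  apply is_series_unique in B1. apply is_series_unique in B2.
  destruct s1, s2; simpl in *. f_equal; congruence.
Qed.

Lemma ser_bound (u : nat -> C) s (v : nat -> R) : is_series u s ->
  (forall k, Cmod (u k) <= v k) -> ex_series v -> Cmod s <= 2 * Series v.
Proof.
  intros Hs Hb Hv. destruct (ser_re _ _ Hs) as [H1 H2].
  assert (E1: ex_series (fun k => Rabs (fst (u k)))).
  { apply (@ex_series_le R_AbsRing R_CompleteNormedModule _ v); auto. intros k. change (norm _) with (Rabs (Rabs (fst (u k)))).
    rewrite Rabs_Rabsolu. eapply Rle_trans; [apply re_le_Cmod|apply Hb]. }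
  assert (E2: ex_series (fun k => Rabs (snd (u k)))).
  { apply (@ex_series_le R_AbsRing R_CompleteNormedModule _ v); auto. intros k. change (norm _) with (Rabs (Rabs (snd (u k)))).
    rewrite Rabs_Rabsolu. eapply Rle_trans; [apply im_le_Cmod|apply Hb]. }
  apply is_series_unique in H1. apply is_series_unique in H2.
  assert (L1: Rabs (fst s) <= Series v).
  { rewrite <- H1. eapply Rle_trans; [apply Series_Rabs; auto|]. apply Series_le; auto.
    intros k; split; [apply Rabs_pos|]. eapply Rle_trans; [apply re_le_Cmod|apply Hb]. }
  assert (L2: Rabs (snd s) <= Series v).
  { rewrite <- H2. eapply Rle_trans; [apply Series_Rabs; auto|]. apply Series_le; auto.
    intros k; split; [apply Rabs_pos|]. eapply Rle_trans; [apply im_le_Cmod|apply Hb]. }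
  pose proof (Cmod_le_sum s). lra.
Qed.

Definition spk {G : AbelianMonoid} (i : nat) (v : G) (k : nat) : G :=
  if Nat.eqb k i then v else zero.

Lemma sum_n_spk {G : AbelianMonoid} (i : nat) (v : G) N :
  sum_n (spk i v) N = if Nat.leb i N then v else zero.
Proof.
  induction N.
  - rewrite sum_O. unfold spk. destruct i; simpl; reflexivity.
  - rewrite sum_Sn, IHN. unfold spk.
    destruct (Nat.leb_spec i N); destruct (Nat.eqb_spec (S N) i);
    destruct (Nat.leb_spec i (S N)); try lia;
    rewrite ?plus_zero_r, ?plus_zero_l; reflexivity.
Qed.

Lemma is_series_spk {K : AbsRing} {V : NormedModule K} (i : nat) (v : V) :
  is_series (spk i v) v.
Proof.
  unfold is_series. apply filterlim_ext_loc with (fun _ => v).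
  - exists i. intros N HN. rewrite sum_n_spk. apply Nat.leb_le in HN. rewrite HN. reflexivity.
  - apply filterlim_const.
Qed.


Definition Conv (c : nat -> C) := forall x : R, 0 < x < 1 -> ex_series (fun k => (c k * RtoC x ^ k)%C).

Lemma term_le_sum (a : nat -> R) k N : (forall i, 0 <= a i) -> (k <= N)%nat -> a k <= sum_f_R0 a N.
Proof.
  intros Hp. induction N; intros Hk.
  - assert (k = 0%nat) by lia. subst. simpl. lra.
  - destruct (Nat.eq_dec k (S N)).
    + subst. simpl. pose proof (cond_pos_sum a N Hp). lra.
    + simpl. pose proof (Hp (S N)). assert (a k <= sum_f_R0 a N) by (apply IHN; lia). lra.
Qed.

Lemma Cmod_term (c : C) (x : R) k : 0 <= x -> Cmod (c * RtoC x ^ k)%C = Cmod c * x ^ k.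
Proof. intros Hx. rewrite Cmod_mult, Cmod_pow, Cmod_R, Rabs_pos_eq; auto. Qed.

Lemma coef_bound c : Conv c -> forall rho, 0 < rho < 1 ->
  exists B, 0 <= B /\ forall k, Cmod (c k) * rho ^ k <= B.
Proof.
  intros Hc rho Hr. destruct (Hc rho Hr) as [s Hs].
  destruct (ser_re _ _ Hs) as [H1 H2].
  assert (L1 := ex_series_lim_0 _ (ex_intro _ _ H1)).
  assert (L2 := ex_series_lim_0 _ (ex_intro _ _ H2)).
  apply is_lim_seq_spec in L1. apply is_lim_seq_spec in L2.
  destruct (L1 (mkposreal 1 Rlt_0_1)) as [N1 HN1].
  destruct (L2 (mkposreal 1 Rlt_0_1)) as [N2 HN2].
  set (N := Nat.max N1 N2).
  exists (2 + sum_f_R0 (fun k => Cmod (c k) * rho ^ k) N). split.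
  - pose proof (cond_pos_sum (fun k => Cmod (c k) * rho ^ k) N).
    assert (forall i, 0 <= Cmod (c i) * rho ^ i).
    { intros i. apply Rmult_le_pos; [apply Cmod_ge_0| apply pow_le; lra]. }
    specialize (H H0). lra.
  - intros k. assert (Hnn: forall i, 0 <= Cmod (c i) * rho ^ i).
    { intros i. apply Rmult_le_pos; [apply Cmod_ge_0| apply pow_le; lra]. }
    pose proof (cond_pos_sum _ N Hnn).
    destruct (Nat.le_gt_cases k N) as [l|l].
    + pose proof (term_le_sum _ k N Hnn l). lra.
    + specialize (HN1 k ltac:(unfold N in *; lia)). specialize (HN2 k ltac:(unfold N in *; lia)).
      change (Rabs (fst (c k * RtoC rho ^ k)%C - 0) < 1) in HN1. change (Rabs (snd (c k * RtoC rho ^ k)%C - 0) < 1) in HN2. rewrite Rminus_0_r in HN1, HN2.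
      pose proof (Cmod_le_sum (c k * RtoC rho ^ k)%C).
      rewrite Cmod_term in H0 by lra. lra.
Qed.

Lemma geom_bound c : Conv c -> forall r, 0 <= r < 1 ->
  exists C0 q, 0 <= C0 /\ 0 <= q < 1 /\ forall k, Cmod (c k) * r ^ k <= C0 * q ^ k.
Proof.
  intros Hc r Hr. set (rho := (1 + r) / 2).
  destruct (coef_bound c Hc rho ltac:(unfold rho; lra)) as [B [HB0 HB]].
  exists B, (r / rho). split; [auto|]. split.
  - unfold rho. split. apply Rmult_le_pos; [lra| apply Rlt_le, Rinv_0_lt_compat; lra].
    apply Rmult_lt_reg_r with ((1+r)/2); [lra|]. field_simplify; lra.
  - intros k. assert (Hr' : r = rho * (r / rho)) by (unfold rho; field; lra).
    rewrite Hr' at 1. rewrite Rpow_mult_distr, <- Rmult_assoc.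
    apply Rmult_le_compat_r; [apply pow_le; unfold rho; apply Rmult_le_pos; [lra| apply Rlt_le, Rinv_0_lt_compat; lra]|].
    apply HB.
Qed.

Lemma pow_le1 x k : 0 <= x <= 1 -> x ^ k <= 1.
Proof. intros H. induction k; simpl. lra. assert (0 <= x ^ k) by (apply pow_le; lra). nra. Qed.

Lemma pow_decr x M k : 0 <= x <= 1 -> (M <= k)%nat -> x ^ k <= x ^ M.
Proof.
  intros H Hk. replace k with (M + (k - M))%nat by lia. rewrite pow_add.
  assert (0 <= x ^ M) by (apply pow_le; lra). pose proof (pow_le1 x (k - M) H).
  assert (0 <= x ^ (k-M)) by (apply pow_le; lra). nra.
Qed.

Lemma kx_bound x k : 0 <= x < 1 -> INR (S k) * x ^ k * (1 - x) <= 1 - x ^ (S k).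
Proof.
  intros Hx. induction k.
  - simpl pow. rewrite S_INR; simpl INR. lra.
  - rewrite S_INR. simpl pow. simpl pow in IHk.
    assert (0 <= x ^ k) by (apply pow_le; lra).
    assert (x ^ k <= 1) by (apply pow_le1; lra).
    assert (x * x ^ k <= 1) by nra.
    assert (x * (INR (S k) * x ^ k * (1 - x)) <= x * (1 - x * x ^ k)) by (apply Rmult_le_compat_l; lra).
    nra.
Qed.

Lemma deriv_geom c : Conv c -> forall r, 0 <= r < 1 ->
  exists C0 q, 0 <= C0 /\ 0 <= q < 1 /\
    forall k, Cmod (RtoC (INR (S k)) * c (S k))%C * r ^ k <= C0 * q ^ k.
Proof.
  intros Hc r Hr. set (rho := (1 + r) / 2).
  assert (Hrho : 0 < rho < 1) by (unfold rho; lra).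
  destruct (coef_bound c Hc rho Hrho) as [B [HB0 HB]].
  set (s := r / rho).
  assert (Hs : 0 <= s < 1).
  { unfold s, rho. split. apply Rmult_le_pos; [lra| apply Rlt_le, Rinv_0_lt_compat; lra].
    apply Rmult_lt_reg_r with ((1+r)/2); [lra|]. field_simplify; lra. }
  set (q := (1 + s) / 2). set (x := s / q).
  assert (Hq : 0 < q < 1) by (unfold q; lra).
  assert (Hx : 0 <= x < 1).
  { unfold x. split. apply Rmult_le_pos; [lra| apply Rlt_le, Rinv_0_lt_compat; lra].
    apply Rmult_lt_reg_r with q; [lra|]. unfold q. field_simplify; lra. }
  exists (B / (rho * (1 - x))), q. split; [|split; [lra|]].
  { apply Rmult_le_pos; auto. apply Rlt_le, Rinv_0_lt_compat. nra. }
  intros k. rewrite Cmod_mult, Cmod_R, Rabs_pos_eq by apply pos_INR.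
  set (A := Cmod (c (S k))). assert (HA0 : 0 <= A) by apply Cmod_ge_0.
  specialize (HB (S k)). fold A in HB.
  assert (Er : r ^ k = rho ^ k * (x ^ k * q ^ k)).
  { rewrite <- Rpow_mult_distr, <- Rpow_mult_distr. f_equal. unfold x, s. field. lra. }
  rewrite Er.
  pose proof (kx_bound x k Hx).
  assert (0 <= x ^ S k) by (apply pow_le; lra).
  assert (H1 : INR (S k) * x ^ k <= 1 / (1 - x)).
  { apply Rmult_le_reg_r with (1 - x); [lra|]. replace (1 / (1 - x) * (1 - x)) with 1 by (field; lra). lra. }
  assert (H2 : A * rho ^ k <= B / rho).
  { apply Rmult_le_reg_r with rho; [lra|]. replace (B / rho * rho) with B by (field; lra).
    simpl pow in HB. lra. }
  assert (0 <= q ^ k) by (apply pow_le; lra).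
  assert (0 <= rho ^ k) by (apply pow_le; lra).
  assert (0 <= x ^ k) by (apply pow_le; lra).
  assert (0 <= INR (S k)) by apply pos_INR.
  replace (INR (S k) * A * (rho ^ k * (x ^ k * q ^ k))) with ((A * rho ^ k) * (INR (S k) * x ^ k) * q ^ k) by ring.
  replace (B / (rho * (1 - x)) * q ^ k) with ((B / rho) * (1 / (1 - x)) * q ^ k) by (field; lra).
  apply Rmult_le_compat_r; auto. apply Rmult_le_compat; auto; nra.
Qed.


Fixpoint sumR (N : nat) (f : nat -> R) : R :=
  match N with O => 0 | S N' => sumR N' f + f N' end.

Lemma sumR_ext N f g : (forall j, (j < N)%nat -> f j = g j) -> sumR N f = sumR N g.
Proof. induction N; intros H; simpl; auto. rewrite IHN, H; auto. Qed.

Lemma sumR_lin2 N (al be : R) f g :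
  sumR N (fun j => al * f j + be * g j) = al * sumR N f + be * sumR N g.
Proof. induction N; simpl. ring. rewrite IHN. ring. Qed.

Lemma sumR_lin4 N (c1 c2 c3 c4 : R) f1 f2 f3 f4 :
  sumR N (fun j => c1 * f1 j + c2 * f2 j + c3 * f3 j + c4 * f4 j) =
  c1 * sumR N f1 + c2 * sumR N f2 + c3 * sumR N f3 + c4 * sumR N f4.
Proof. induction N; simpl. ring. rewrite IHN. ring. Qed.

Lemma sumR_scal N c f : sumR N (fun j => c * f j) = c * sumR N f.
Proof. induction N; simpl. ring. rewrite IHN. ring. Qed.

Lemma sumR_const N c : sumR N (fun _ => c) = INR N * c.
Proof. induction N; simpl sumR. simpl; ring. rewrite IHN, S_INR. ring. Qed.

Lemma sumR_nonneg N f : (forall j, (j < N)%nat -> 0 <= f j) -> 0 <= sumR N f.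
Proof. induction N; intros H; simpl. lra. pose proof (H N ltac:(lia)). pose proof (IHN ltac:(intros; apply H; lia)). lra. Qed.

Lemma sumR_tele N g : sumR N (fun j => g (S j) - g j) = g N - g O.
Proof. induction N; simpl. ring. rewrite IHN. ring. Qed.

Lemma sumR_abs_le N f B : (forall j, Rabs (f j) <= B) -> Rabs (sumR N f) <= INR N * B.
Proof.
  intros H. induction N; simpl sumR.
  - simpl. rewrite Rabs_R0. lra.
  - rewrite S_INR. eapply Rle_trans; [apply Rabs_triang|]. specialize (H N). lra.
Qed.

Lemma INR_pos_lt N : (0 < N)%nat -> 0 < INR N.
Proof. intros. apply lt_0_INR. lia. Qed.

Lemma orth N p : (0 < p < N)%nat ->
  sumR N (fun j => cos (INR p * (INR j * (2 * PI / INR N)))) = 0 /\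
  sumR N (fun j => sin (INR p * (INR j * (2 * PI / INR N)))) = 0.
Proof.
  intros Hp. assert (HN : 0 < INR N) by (apply INR_pos_lt; lia).
  assert (Hpn : INR p < INR N) by (apply lt_INR; lia).
  assert (Hp0 : 0 < INR p) by (apply INR_pos_lt; lia).
  set (x := INR p * (2 * PI / INR N)).
  assert (Hx : 0 < x / 2 < PI).
  { unfold x. pose proof PI_RGT_0. split.
    - apply Rmult_lt_0_compat; [|lra]. apply Rmult_lt_0_compat; [lra|]. apply Rmult_lt_0_compat; [lra|]. apply Rinv_0_lt_compat; lra.
    - replace (INR p * (2 * PI / INR N) / 2) with (PI * (INR p / INR N)) by (field; lra).
      rewrite <- (Rmult_1_r PI) at 2. apply Rmult_lt_compat_l; [lra|].
      apply Rmult_lt_reg_r with (INR N); [lra|]. field_simplify; lra. }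
  pose proof (sin_gt_0 _ (proj1 Hx) (proj2 Hx)) as Hs.
  assert (HNx : INR N * x = 2 * INR p * PI) by (unfold x; field; lra).
  split.
  - set (g := fun j => sin (INR j * x - x / 2)).
    assert (E : sumR N (fun j => g (S j) - g j) = 2 * sin (x / 2) * sumR N (fun j => cos (INR p * (INR j * (2 * PI / INR N))))).
    { rewrite <- sumR_scal. apply sumR_ext. intros j _. unfold g. rewrite S_INR.
      replace ((INR j + 1) * x - x / 2) with (INR j * x + x / 2) by field.
      replace (INR p * (INR j * (2 * PI / INR N))) with (INR j * x) by (unfold x; ring).
      rewrite sin_plus, sin_minus. ring. }
    rewrite sumR_tele in E. unfold g in E. simpl INR in E.
    rewrite HNx in E.
    replace (2 * INR p * PI - x / 2) with (- (x/2) + 2 * INR p * PI) in E by ring.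
    rewrite sin_period in E. replace (0 * x - x / 2) with (- (x / 2)) in E by ring.
    rewrite Rminus_diag in E.
    symmetry in E. apply Rmult_integral in E. destruct E as [E|E]; [lra|exact E].
  - set (g := fun j => cos (INR j * x - x / 2)).
    assert (E : sumR N (fun j => g (S j) - g j) = - 2 * sin (x / 2) * sumR N (fun j => sin (INR p * (INR j * (2 * PI / INR N))))).
    { rewrite <- sumR_scal. apply sumR_ext. intros j _. unfold g. rewrite S_INR.
      replace ((INR j + 1) * x - x / 2) with (INR j * x + x / 2) by field.
      replace (INR p * (INR j * (2 * PI / INR N))) with (INR j * x) by (unfold x; ring).
      rewrite cos_plus, cos_minus. ring. }
    rewrite sumR_tele in E. unfold g in E. simpl INR in E.
    rewrite HNx in E.
    replace (2 * INR p * PI - x / 2) with (- (x/2) + 2 * INR p * PI) in E by ring.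
    rewrite cos_period in E. replace (0 * x - x / 2) with (- (x / 2)) in E by ring.
    rewrite Rminus_diag in E.
    symmetry in E. apply Rmult_integral in E. destruct E as [E|E]; [lra|exact E].
Qed.

Lemma demoivre r phi k :
  Cpow (r * cos phi, r * sin phi) k = (r ^ k * cos (INR k * phi), r ^ k * sin (INR k * phi)).
Proof.
  induction k.
  - simpl. rewrite Rmult_0_l, cos_0, sin_0. unfold RtoC. f_equal; ring.
  - simpl Cpow. rewrite IHk, S_INR. unfold Cmult. cbn [fst snd pow].
    replace ((INR k + 1) * phi) with (INR k * phi + phi) by ring.
    rewrite cos_plus, sin_plus. f_equal; ring.
Qed.

Lemma Cmod_polar r phi : 0 <= r -> Cmod (r * cos phi, r * sin phi) = r.
Proof.
  intros Hr. unfold Cmod. simpl.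
  replace ((r * cos phi) * ((r * cos phi) * 1) + (r * sin phi) * ((r * sin phi) * 1)) with (r * r)
    by (pose proof (sin2_cos2 phi); unfold Rsqr in *; nra).
  apply sqrt_square; auto.
Qed.

Lemma spike_series (t : nat -> R) i D p M : 0 <= p < 1 -> 0 <= D ->
  (forall k, k <> i -> Rabs (t k) <= D * p ^ M * p ^ k) ->
  ex_series t /\ Rabs (Series t - t i) <= D * p ^ M / (1 - p).
Proof.
  intros Hp HD Hb.
  set (t' := fun k => if Nat.eqb k i then 0 else t k).
  assert (Hb' : forall k, Rabs (t' k) <= D * p ^ M * p ^ k).
  { intros k. unfold t'. destruct (Nat.eqb_spec k i).
    - rewrite Rabs_R0. apply Rmult_le_pos; [apply Rmult_le_pos; auto|]; apply pow_le; lra.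
    - auto. }
  assert (Hg : is_series (fun k => D * p ^ M * p ^ k) (D * p ^ M * / (1 - p))).
  { assert (Hq : Rabs p < 1) by (rewrite Rabs_pos_eq; lra).
    exact (is_series_scal_l (D * p ^ M) _ _ (is_series_geom p Hq)). }
  assert (Ex' : ex_series t').
  { apply (@ex_series_le R_AbsRing R_CompleteNormedModule _ _ Hb'). eexists; exact Hg. }
  assert (Ex'' : ex_series (fun k => Rabs (t' k))).
  { apply (@ex_series_le R_AbsRing R_CompleteNormedModule _ (fun k => D * p ^ M * p ^ k)).
    intros k. change (norm _) with (Rabs (Rabs (t' k))). rewrite Rabs_Rabsolu. auto.
    eexists; exact Hg. }
  assert (Ht : is_series t (Series t' + t i)).
  { eapply is_series_ext; [| apply (is_series_plus _ _ _ _ (Series_correct _ Ex') (is_series_spk i (t i)))].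
    intros k. unfold t', spk. destruct (Nat.eqb_spec k i); subst; simpl.
    - change (0 + t i = t i). ring.
    - change (t k + 0 = t k). ring. }
  split; [eexists; exact Ht|].
  rewrite (is_series_unique _ _ Ht). replace (Series t' + t i - t i) with (Series t') by ring.
  eapply Rle_trans; [apply Series_Rabs; auto|].
  replace (D * p ^ M / (1 - p)) with (Series (fun k => D * p ^ M * p ^ k)) by (rewrite (is_series_unique _ _ Hg); reflexivity).
  apply Series_le; [|eexists; exact Hg]. intros k; split; [apply Rabs_pos| auto].
Qed.


Lemma series_sumR N (F : nat -> nat -> R) (w : nat -> R) :
  (forall j, ex_series (F j)) ->
  is_series (fun k => sumR N (fun j => F j k * w j)) (sumR N (fun j => Series (F j) * w j)).
Proof.
  intros HF. induction N; simpl.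
  - eapply is_series_ext; [|apply (is_series_spk (V := R_NormedModule) 0 0)].
    intros k. unfold spk. destruct (Nat.eqb k 0); reflexivity.
  - eapply is_series_ext; [|apply (is_series_plus _ _ _ _ IHN (is_series_scal_r (w N) _ _ (Series_correct _ (HF N))))].
    intros k. reflexivity.
Qed.

Lemma unit_vec a b rho : 0 <= rho -> rho ^ 2 = a ^ 2 + b ^ 2 ->
  exists c s, c ^ 2 + s ^ 2 = 1 /\ c * a + s * b = rho.
Proof.
  intros H0 H. destruct (Req_dec rho 0) as [E|E].
  - subst. exists 1, 0. split; [ring|]. nra.
  - exists (a / rho), (b / rho). split.
    + field_simplify; [|auto]. rewrite <- H. field. auto.
    + field_simplify; [|auto]. replace (a ^ 2 + b ^ 2) with (rho ^ 2) by auto. field. auto.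
Qed.

Lemma orth_diff N k n : k <> n -> (k < N)%nat -> (n < N)%nat ->
  sumR N (fun j => cos ((INR k - INR n) * (INR j * (2 * PI / INR N)))) = 0 /\
  sumR N (fun j => sin ((INR k - INR n) * (INR j * (2 * PI / INR N)))) = 0.
Proof.
  intros Hkn Hk Hn. destruct (proj1 (Nat.lt_gt_cases k n) Hkn) as [L|L].
  - destruct (orth N (n - k) ltac:(lia)) as [A B].
    replace (INR k - INR n) with (- INR (n - k)) by (rewrite minus_INR by lia; ring).
    split.
    + rewrite <- A. apply sumR_ext. intros j _. rewrite Ropp_mult_distr_l_reverse, cos_neg. reflexivity.
    + replace 0 with (-1 * 0) by ring. rewrite <- B, <- sumR_scal. apply sumR_ext. intros j _.
      rewrite Ropp_mult_distr_l_reverse, sin_neg. ring.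
  - destruct (orth N (k - n) ltac:(lia)) as [A B].
    replace (INR k - INR n) with (INR (k - n)) by (rewrite minus_INR by lia; ring). auto.
Qed.

Lemma carath_N (e : nat -> C) (beta r C0 q : R) (n N : nat) :
  (1 <= n)%nat -> (2 * n < N)%nat -> 0 < r < 1 -> 0 <= C0 -> 0 <= q < 1 ->
  (forall k, Cmod (e k) * r ^ k <= C0 * q ^ k) ->
  (forall z, Cmod z < 1 -> beta < Series (fun k => Re (e k * z ^ k)%C)) ->
  Cmod (e n) * r ^ n <= 2 * (Re (e 0%nat) - beta) + 8 * (C0 * sqrt q ^ (N - n) / (1 - sqrt q)).
Proof.
  intros Hn HN Hr HC0 Hq Hb Hpos.
  assert (HNp : 0 < INR N) by (apply INR_pos_lt; lia).
  set (th := 2 * PI / INR N).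
  set (a := fun k => Re (e k) * r ^ k).
  set (b := fun k => Im (e k) * r ^ k).
  set (X := fun j k => a k * cos (INR k * (INR j * th)) - b k * sin (INR k * (INR j * th))).
  assert (Hab : forall k, Rabs (a k) + Rabs (b k) <= 2 * C0 * q ^ k).
  { intros k. unfold a, b. assert (0 <= r ^ k) by (apply pow_le; lra).
    rewrite !Rabs_mult, (Rabs_pos_eq (r ^ k)) by auto.
    pose proof (re_le_Cmod (e k)). pose proof (im_le_Cmod (e k)). specialize (Hb k). nra. }
  assert (HXb : forall j k, Rabs (X j k) <= 2 * C0 * q ^ k).
  { intros j k. unfold X. eapply Rle_trans; [apply Rabs_triang|]. rewrite Rabs_Ropp, !Rabs_mult.
    pose proof (COS_bound (INR k * (INR j * th))). pose proof (SIN_bound (INR k * (INR j * th))).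
    assert (Rabs (cos (INR k * (INR j * th))) <= 1) by (apply Rabs_le; lra).
    assert (Rabs (sin (INR k * (INR j * th))) <= 1) by (apply Rabs_le; lra).
    pose proof (Rabs_pos (a k)). pose proof (Rabs_pos (b k)). specialize (Hab k). nra. }
  assert (Hgq : ex_series (fun k => 2 * C0 * q ^ k)).
  { apply (ex_series_scal_l (V := R_NormedModule) (2 * C0)). apply ex_series_geom. rewrite Rabs_pos_eq; lra. }
  assert (Hex : forall j, ex_series (X j)).
  { intros j. apply (@ex_series_le R_AbsRing R_CompleteNormedModule _ _ (HXb j) Hgq). }
  assert (Hx : forall j, beta < Series (X j)).
  { intros j. set (z := (r * cos (INR j * th), r * sin (INR j * th)) : C).
    assert (Hz : Cmod z < 1) by (unfold z; rewrite Cmod_polar; lra).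
    specialize (Hpos z Hz). erewrite Series_ext; [exact Hpos|].
    intros k. unfold z. rewrite demoivre. unfold X, a, b. destruct (e k) as [u v]. unfold Re, Im, Cmult. simpl. ring. }
  set (p := sqrt q).
  assert (Hp : 0 <= p < 1).
  { unfold p. split; [apply sqrt_pos|]. rewrite <- sqrt_1. apply sqrt_lt_1_alt. lra. }
  assert (Hpq : p * p = q) by (unfold p; apply sqrt_sqrt; lra).
  set (M := (N - n)%nat).
  assert (HqM : forall k, (M <= k)%nat -> q ^ k <= p ^ M * p ^ k).
  { intros k Hk. rewrite <- Hpq, Rpow_mult_distr. apply Rmult_le_compat_r; [apply pow_le; lra|].
    apply pow_decr; auto; lra. }
  set (rho := Cmod (e n) * r ^ n).
  assert (Hrho : rho ^ 2 = a n ^ 2 + b n ^ 2).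
  { unfold rho, a, b. rewrite !Rpow_mult_distr, Cmod2_alt. ring. }
  assert (Hrho0 : 0 <= rho) by (unfold rho; apply Rmult_le_pos; [apply Cmod_ge_0|apply pow_le; lra]).
  destruct (unit_vec (a n) (b n) rho Hrho0 Hrho) as [c [s [Hcs Hcsr]]].
  set (W := fun j => c * cos (INR n * (INR j * th)) - s * sin (INR n * (INR j * th))).
  assert (HW : forall j, Rabs (W j) <= 1).
  { intros j. unfold W. pose proof (sin2_cos2 (INR n * (INR j * th))). unfold Rsqr in *.
    set (co := cos (INR n * (INR j * th))) in *. set (si := sin (INR n * (INR j * th))) in *.
    assert (E : (c * co - s * si) * (c * co - s * si) + (c * si + s * co) * (c * si + s * co) = (c^2 + s^2) * (si * si + co * co)) by ring.
    rewrite Hcs, H in E.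
    assert (0 <= (c * si + s * co) * (c * si + s * co)) by apply Rle_0_sqr.
    assert ((c * co - s * si) * (c * co - s * si) <= 1) by lra.
    apply Rabs_le. split; nra. }
  assert (HWs : sumR N W = 0).
  { destruct (orth N n ltac:(lia)) as [A B]. unfold W.
    rewrite (sumR_ext N _ (fun j => c * cos (INR n * (INR j * th)) + (- s) * sin (INR n * (INR j * th)))) by (intros; ring).
    rewrite sumR_lin2. unfold th. rewrite A, B. ring. }
  set (T1 := fun k => sumR N (fun j => X j k * W j)).
  set (T0 := fun k => sumR N (fun j => X j k * 1)).
  pose proof (series_sumR N X W Hex) as HS1. fold T1 in HS1.
  pose proof (series_sumR N X (fun _ => 1) Hex) as HS0. fold T0 in HS0.
  assert (HT1 : forall k, T1 k = 1/2 * ((a k * c + b k * s) * sumR N (fun j => cos ((INR k - INR n) * (INR j * th)))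
     + (a k * s - b k * c) * sumR N (fun j => sin ((INR k - INR n) * (INR j * th)))
     + (a k * c - b k * s) * sumR N (fun j => cos ((INR k + INR n) * (INR j * th)))
     + (- (a k * s + b k * c)) * sumR N (fun j => sin ((INR k + INR n) * (INR j * th))))).
  { intros k. unfold T1. rewrite <- sumR_lin4, <- sumR_scal. apply sumR_ext. intros j _. unfold X, W.
    set (ph := INR j * th).
    replace ((INR k - INR n) * ph) with (INR k * ph - INR n * ph) by ring.
    replace ((INR k + INR n) * ph) with (INR k * ph + INR n * ph) by ring.
    rewrite cos_minus, sin_minus, cos_plus, sin_plus. field. }
  assert (HT1n : T1 n = INR N / 2 * rho).
  { rewrite HT1. replace (INR n - INR n) with 0 by ring.
    rewrite (sumR_ext N (fun j => cos (0 * (INR j * th))) (fun _ => 1)) by (intros; rewrite Rmult_0_l; apply cos_0).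
    rewrite (sumR_ext N (fun j => sin (0 * (INR j * th))) (fun _ => 0)) by (intros; rewrite Rmult_0_l; apply sin_0).
    rewrite !sumR_const. rewrite <- plus_INR. destruct (orth N (n+n) ltac:(lia)) as [A B].
    fold th in A, B. rewrite A, B. rewrite <- Hcsr. field. }
  assert (HT1z : forall k, k <> n -> (k < M)%nat -> T1 k = 0).
  { intros k Hk HkM. unfold M in HkM. rewrite HT1.
    destruct (orth_diff N k n Hk ltac:(lia) ltac:(lia)) as [A B].
    destruct (orth N (k+n) ltac:(lia)) as [A' B']. rewrite plus_INR in A', B'.
    fold th in A, B, A', B'. rewrite A, B, A', B'. ring. }
  assert (HT1b : forall k, Rabs (T1 k) <= INR N * (2 * C0 * q ^ k)).
  { intros k. unfold T1. apply sumR_abs_le. intros j. rewrite Rabs_mult.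
    pose proof (HXb j k). pose proof (HW j). pose proof (Rabs_pos (X j k)). pose proof (Rabs_pos (W j)). nra. }
  assert (HT0 : forall k, T0 k = a k * sumR N (fun j => cos (INR k * (INR j * th))) + (- b k) * sumR N (fun j => sin (INR k * (INR j * th)))).
  { intros k. unfold T0. rewrite <- sumR_lin2. apply sumR_ext. intros j _. unfold X. ring. }
  assert (HT00 : T0 0%nat = INR N * Re (e 0%nat)).
  { rewrite HT0. simpl INR.
    rewrite (sumR_ext N (fun j => cos (0 * (INR j * th))) (fun _ => 1)) by (intros; rewrite Rmult_0_l; apply cos_0).
    rewrite (sumR_ext N (fun j => sin (0 * (INR j * th))) (fun _ => 0)) by (intros; rewrite Rmult_0_l; apply sin_0).
    rewrite !sumR_const. unfold a. simpl pow. ring. }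
  assert (HT0z : forall k, k <> 0%nat -> (k < M)%nat -> T0 k = 0).
  { intros k Hk HkM. unfold M in HkM. rewrite HT0.
    destruct (orth N k ltac:(lia)) as [A B]. fold th in A, B. rewrite A, B. ring. }
  assert (HT0b : forall k, Rabs (T0 k) <= INR N * (2 * C0 * q ^ k)).
  { intros k. unfold T0. apply sumR_abs_le. intros j. rewrite Rmult_1_r. apply HXb. }
  set (D := INR N * (2 * C0)).
  assert (HD : 0 <= D) by (unfold D; nra).
  assert (HpM : 0 <= p ^ M) by (apply pow_le; lra).
  assert (Hsp1 : forall k, k <> n -> Rabs (T1 k) <= D * p ^ M * p ^ k).
  { intros k Hk. destruct (Nat.lt_ge_cases k M) as [L|L].
    - rewrite HT1z by auto. rewrite Rabs_R0. assert (0 <= p ^ k) by (apply pow_le; lra). apply Rmult_le_pos; [apply Rmult_le_pos|]; auto.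
    - eapply Rle_trans; [apply HT1b|]. unfold D in *. specialize (HqM k L).
      replace (INR N * (2 * C0 * q ^ k)) with (INR N * (2 * C0) * q ^ k) by ring.
      replace (INR N * (2 * C0) * p ^ M * p ^ k) with (INR N * (2 * C0) * (p ^ M * p ^ k)) by ring. apply Rmult_le_compat_l; auto. }
  assert (Hsp0 : forall k, k <> 0%nat -> Rabs (T0 k) <= D * p ^ M * p ^ k).
  { intros k Hk. destruct (Nat.lt_ge_cases k M) as [L|L].
    - rewrite HT0z by auto. rewrite Rabs_R0. assert (0 <= p ^ k) by (apply pow_le; lra). apply Rmult_le_pos; [apply Rmult_le_pos|]; auto.
    - eapply Rle_trans; [apply HT0b|]. unfold D in *. specialize (HqM k L).
      replace (INR N * (2 * C0 * q ^ k)) with (INR N * (2 * C0) * q ^ k) by ring.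
      replace (INR N * (2 * C0) * p ^ M * p ^ k) with (INR N * (2 * C0) * (p ^ M * p ^ k)) by ring. apply Rmult_le_compat_l; auto. }
  destruct (spike_series T1 n D p M Hp HD Hsp1) as [_ B1].
  destruct (spike_series T0 0 D p M Hp HD Hsp0) as [_ B0].
  assert (E1 : Series T1 = sumR N (fun j => Series (X j) * W j)) by (apply is_series_unique; exact HS1).
  rewrite E1, HT1n in B1.
  change (Rabs (Series T0 - T0 0%nat) <= D * p ^ M / (1 - p)) in B0.
  assert (E0 : Series T0 = sumR N (fun j => Series (X j) * 1)) by (apply is_series_unique; exact HS0).
  rewrite E0, HT00 in B0.
  assert (Hposs : 0 <= sumR N (fun j => (Series (X j) - beta) * (1 - W j))).
  { apply sumR_nonneg. intros j _. apply Rmult_le_pos.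
    - specialize (Hx j). lra.
    - specialize (HW j). apply Rabs_le_between in HW. lra. }
  rewrite (sumR_ext N _ (fun j => 1 * (Series (X j) * 1) + (-1) * (Series (X j) * W j) + (- beta) * 1 + beta * W j)) in Hposs
    by (intros; ring).
  rewrite sumR_lin4, sumR_const, HWs in Hposs.
  apply Rabs_le_between in B1. apply Rabs_le_between in B0.
  set (P := C0 * p ^ M / (1 - p)).
  assert (HE : D * p ^ M / (1 - p) = INR N * 2 * P) by (unfold D, P; field; lra).
  rewrite HE in B1, B0.
  apply Rmult_le_reg_l with (INR N / 2); [lra|].
  fold rho. fold P. nra.
Qed.

Lemma bernoulli_le h n : 0 <= h <= 1 -> 1 - INR n * h <= (1 - h) ^ n.
Proof.
  intros H. induction n.
  - simpl. lra.
  - rewrite S_INR. simpl pow. assert (0 <= 1 - h) by lra.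
    assert ((1 - h) * (1 - INR n * h) <= (1 - h) * (1 - h) ^ n) by (apply Rmult_le_compat_l; lra).
    assert (0 <= INR n * h * h) by (pose proof (pos_INR n); assert (0 <= h * h) by nra; nra).
    nra.
Qed.

Lemma carath (e : nat -> C) (beta : R) (n : nat) : (1 <= n)%nat ->
  (forall r, 0 <= r < 1 -> exists C0 q, 0 <= C0 /\ 0 <= q < 1 /\ forall k, Cmod (e k) * r ^ k <= C0 * q ^ k) ->
  (forall z, Cmod z < 1 -> beta < Series (fun k => Re (e k * z ^ k)%C)) ->
  Cmod (e n) <= 2 * (Re (e 0%nat) - beta).
Proof.
  intros Hn Hb Hpos. set (K := 2 * (Re (e 0%nat) - beta)).
  assert (Step1 : forall r, 0 < r < 1 -> Cmod (e n) * r ^ n <= K).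
  { intros r Hr. destruct (Hb r ltac:(lra)) as [C0 [q [HC0 [Hq Hbr]]]].
    set (p := sqrt q).
    assert (Hp : 0 <= p < 1).
    { unfold p. split; [apply sqrt_pos|]. rewrite <- sqrt_1. apply sqrt_lt_1_alt. lra. }
    apply Rle_plus_epsilon. intros eps Heps.
    set (y := eps * (1 - p) / (8 * C0 + 1)).
    assert (Hy : 0 < y) by (unfold y; apply Rmult_lt_0_compat; [nra| apply Rinv_0_lt_compat; lra]).
    destruct (pow_lt_1_zero p ltac:(rewrite Rabs_pos_eq; lra) y Hy) as [N0 HN0].
    set (N := (N0 + 2 * n + 1)%nat).
    pose proof (carath_N e beta r C0 q n N Hn ltac:(unfold N; lia) Hr HC0 Hq Hbr Hpos) as H.
    fold p in H. fold K in H.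
    specialize (HN0 (N - n)%nat ltac:(unfold N; lia)). rewrite Rabs_pos_eq in HN0 by (apply pow_le; lra).
    assert (8 * (C0 * p ^ (N - n) / (1 - p)) <= eps).
    { assert (0 <= p ^ (N - n)) by (apply pow_le; lra).
      assert (C0 * p ^ (N - n) <= C0 * y) by (apply Rmult_le_compat_l; lra).
      assert (C0 * y * 8 <= eps * (1 - p)).
      { unfold y. apply Rmult_le_reg_r with (8 * C0 + 1); [lra|].
        replace (C0 * (eps * (1 - p) / (8 * C0 + 1)) * 8 * (8 * C0 + 1)) with (8 * C0 * (eps * (1 - p))) by (field; lra).
        assert (0 <= eps * (1 - p)) by nra. nra. }
      replace (8 * (C0 * p ^ (N - n) / (1 - p))) with (8 * (C0 * p ^ (N - n)) / (1 - p)) by (field; lra).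
      apply Rmult_le_reg_r with (1 - p); [lra|]. replace (8 * (C0 * p ^ (N - n)) / (1 - p) * (1 - p)) with (8 * (C0 * p ^ (N - n))) by (field; lra).
      lra. }
    lra. }
  set (A := Cmod (e n)). assert (HA : 0 <= A) by apply Cmod_ge_0.
  apply Rle_plus_epsilon. intros eps Heps.
  set (h := Rmin (1/2) (eps / (INR n * A + 1))).
  assert (HnA : 0 <= INR n * A) by (apply Rmult_le_pos; [apply pos_INR|auto]).
  assert (Hh0 : 0 < h).
  { unfold h. apply Rmin_pos; [lra|]. apply Rmult_lt_0_compat; [lra| apply Rinv_0_lt_compat; lra]. }
  assert (Hh1 : h <= 1/2) by apply Rmin_l.
  assert (Hh2 : h <= eps / (INR n * A + 1)) by apply Rmin_r.
  specialize (Step1 (1 - h) ltac:(lra)). fold A in Step1.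
  pose proof (bernoulli_le h n ltac:(lra)).
  assert (A * (1 - INR n * h) <= K) by nra.
  assert (INR n * A * h <= eps).
  { apply Rle_trans with (INR n * A * (eps / (INR n * A + 1))). apply Rmult_le_compat_l; auto.
    apply Rmult_le_reg_r with (INR n * A + 1); [lra|].
    replace (INR n * A * (eps / (INR n * A + 1)) * (INR n * A + 1)) with (INR n * A * eps) by (field; lra). nra. }
  nra.
Qed.


Lemma sum_n_zero {G : AbelianMonoid} N : sum_n (fun _ => @zero G) N = zero.
Proof. induction N. rewrite sum_O; reflexivity. rewrite sum_Sn, IHN, plus_zero_r. reflexivity. Qed.

Lemma TK (c : nat -> C) (K : nat) : Conv c -> (forall k, (k < K)%nat -> c k = 0%C) ->
  exists C0 d, 0 < d /\ 0 <= C0 /\ forall z s, Cmod z <= d ->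
    is_series (fun k => (c k * z ^ k)%C) s -> Cmod s <= C0 * Cmod z ^ K.
Proof.
  intros Hc HK. destruct (coef_bound c Hc (1/2) ltac:(lra)) as [B [HB0 HB]].
  assert (H2K : 0 <= 2 ^ K) by (apply pow_le; lra).
  exists (4 * B * 2 ^ K), (1/4). split; [lra|]. split; [nra|].
  intros z s Hz Hs. set (w := Cmod z) in *. assert (Hw0 : 0 <= w) by apply Cmod_ge_0.
  assert (Hs' : is_series (fun k => (c (K + k)%nat * z ^ (K + k)%nat)%C) s).
  { destruct K.
    - eapply is_series_ext; [|exact Hs]. intros; reflexivity.
    - apply (is_series_incr_n (fun k => (c k * z ^ k)%C) (S K)); [lia|]. simpl pred.
      rewrite (sum_n_ext_loc _ (fun _ => zero)).
      + rewrite sum_n_zero, plus_zero_r. exact Hs.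
      + intros k Hk. simpl in Hk. rewrite HK by lia. change (0 * z ^ k = 0)%C. ring. }
  set (v := fun k => w ^ K * (B * 2 ^ K * (1/2) ^ k)).
  assert (Hv : is_series v (w ^ K * (B * 2 ^ K) * / (1 - 1/2))).
  { assert (Hq : Rabs (1/2) < 1) by (rewrite Rabs_pos_eq; lra).
    eapply is_series_ext; [|exact (is_series_scal_l (w ^ K * (B * 2 ^ K)) _ _ (is_series_geom (1/2) Hq))].
    intros k. unfold v. change (w ^ K * (B * 2 ^ K) * (1/2) ^ k = w ^ K * (B * 2 ^ K * (1 / 2) ^ k)). ring. }
  assert (Hb : forall k, Cmod (c (K + k)%nat * z ^ (K + k)%nat)%C <= v k).
  { intros k. rewrite Cmod_mult, Cmod_pow. fold w. rewrite pow_add. unfold v.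
    set (A := Cmod (c (K + k)%nat)). assert (HA : 0 <= A) by apply Cmod_ge_0.
    specialize (HB (K + k)%nat). fold A in HB. rewrite pow_add in HB.
    assert (Hwk : w ^ k <= (1/4) ^ k) by (apply pow_incr; lra).
    assert (E2 : (1/4) ^ k = (1/2) ^ k * (1/2) ^ k) by (rewrite <- Rpow_mult_distr; f_equal; field).
    assert (E3 : 2 ^ K * (1/2) ^ K = 1) by (rewrite <- Rpow_mult_distr; replace (2 * (1/2)) with 1 by field; apply pow1).
    assert (H12k : 0 <= (1/2) ^ k) by (apply pow_le; lra).
    assert (HwK : 0 <= w ^ K) by (apply pow_le; lra).
    assert (A * w ^ k <= A * ((1/2) ^ k * (1/2) ^ k)) by (rewrite <- E2; apply Rmult_le_compat_l; auto).
    assert (A * ((1/2) ^ k * (1/2) ^ k) <= B * 2 ^ K * (1/2) ^ k).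
    { replace (A * ((1/2) ^ k * (1/2) ^ k)) with (A * ((1/2) ^ K * (1/2) ^ k) * 2 ^ K * (1/2) ^ k)
        by (transitivity (A * ((1/2) ^ k * (1/2) ^ k) * (2 ^ K * (1/2) ^ K)); [ring | rewrite E3; ring]).
      apply Rmult_le_compat_r; auto. apply Rmult_le_compat_r; auto. }
    replace (A * (w ^ K * w ^ k)) with (w ^ K * (A * w ^ k)) by ring.
    apply Rmult_le_compat_l; auto. lra. }
  pose proof (ser_bound _ _ _ Hs' Hb (ex_intro _ _ Hv)) as H.
  rewrite (is_series_unique _ _ Hv) in H. replace (/ (1 - 1/2)) with 2 in H by field. lra.
Qed.

Lemma RtoC_neq0 x : x <> 0 -> RtoC x <> 0%C.
Proof. intros H E. apply (f_equal fst) in E. simpl in E. lra. Qed.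

Lemma small_zero x A d : 0 <= x -> 0 < d -> (forall t, 0 < t < d -> x <= A * t) -> x = 0.
Proof.
  intros Hx Hd H. destruct (Req_dec x 0) as [E|E]; auto. exfalso.
  assert (Hx' : 0 < x) by lra. pose proof (Rabs_pos A).
  set (t := Rmin (d/2) (x / (2 * (Rabs A + 1)))).
  assert (Ht0 : 0 < t) by (unfold t; apply Rmin_pos; [lra| apply Rmult_lt_0_compat; [lra| apply Rinv_0_lt_compat; lra]]).
  assert (Ht1 : t <= d / 2) by apply Rmin_l.
  assert (Ht2 : t <= x / (2 * (Rabs A + 1))) by apply Rmin_r.
  specialize (H t ltac:(lra)).
  assert (A * t <= Rabs A * t) by (apply Rmult_le_compat_r; [lra| apply Rle_abs]).
  assert (Rabs A * t <= Rabs A * (x / (2 * (Rabs A + 1)))) by (apply Rmult_le_compat_l; lra).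
  assert (Rabs A * (x / (2 * (Rabs A + 1))) < x).
  { apply Rmult_lt_reg_r with (2 * (Rabs A + 1)); [lra|].
    replace (Rabs A * (x / (2 * (Rabs A + 1))) * (2 * (Rabs A + 1))) with (Rabs A * x) by (field; lra). nra. }
  lra.
Qed.

Lemma UQ (K : nat) : forall (c : nat -> C), Conv c ->
  (exists C0 d, 0 < d /\ forall t s, 0 < t < d ->
     is_series (fun k => (c k * RtoC t ^ k)%C) s -> Cmod s <= C0 * t ^ K) ->
  forall k, (k < K)%nat -> c k = 0%C.
Proof.
  induction K; intros c Hc [C0 [d [Hd HB]]] k Hk; [lia|].
  set (c' := fun k => if Nat.eqb k 0 then RtoC 0 else c k).
  assert (Hser' : forall x s, is_series (fun k => (c k * RtoC x ^ k)%C) s ->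
            is_series (fun k => (c' k * RtoC x ^ k)%C) (s - c 0%nat)%C).
  { intros x s Hs. eapply is_series_ext; [| apply (is_series_minus _ _ _ _ Hs (is_series_spk (V := C_NormedModule) 0 (c 0%nat)))].
    intros k0. unfold c', spk. destruct (Nat.eqb_spec k0 0); subst; simpl.
    - change (c 0%nat * 1 - c 0%nat = 0 * 1)%C. ring.
    - change (c k0 * RtoC x ^ k0 - 0 = c k0 * RtoC x ^ k0)%C. ring. }
  assert (Hc' : Conv c').
  { intros x Hx. destruct (Hc x Hx) as [s Hs]. eexists. apply Hser'. exact Hs. }
  destruct (TK c' 1 Hc' ltac:(intros k0 Hk0; assert (k0 = 0%nat) by lia; subst; reflexivity)) as [C1 [d1 [Hd1 [HC1 HT]]]].
  assert (H0 : c 0%nat = 0%C).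
  { apply Cmod_eq_0. apply (small_zero _ (Rabs C0 + C1) (Rmin d (Rmin d1 (1/2)))).
    - apply Cmod_ge_0.
    - apply Rmin_pos; auto. apply Rmin_pos; lra.
    - intros t Ht. pose proof (Rmin_l d (Rmin d1 (1/2))). pose proof (Rmin_r d (Rmin d1 (1/2))).
      pose proof (Rmin_l d1 (1/2)). pose proof (Rmin_r d1 (1/2)).
      destruct (Hc t ltac:(lra)) as [s Hs].
      pose proof (HB t s ltac:(lra) Hs) as B1.
      pose proof (HT (RtoC t) (s - c 0%nat)%C ltac:(rewrite Cmod_R, Rabs_pos_eq; lra) (Hser' _ _ Hs)) as B2.
      rewrite Cmod_R, Rabs_pos_eq in B2 by lra. simpl pow in B2.
      assert (E : c 0%nat = (s - (s - c 0%nat))%C) by ring.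
      rewrite E. eapply Rle_trans; [apply Cmod_triangle|]. rewrite Cmod_opp.
      assert (t ^ S K <= t) by (simpl; assert (t ^ K <= 1) by (apply pow_le1; lra); assert (0 <= t ^ K) by (apply pow_le; lra); nra).
      assert (C0 * t ^ S K <= Rabs C0 * t).
      { apply Rle_trans with (Rabs C0 * t ^ S K). apply Rmult_le_compat_r; [apply pow_le; lra| apply Rle_abs].
        apply Rmult_le_compat_l; [apply Rabs_pos| auto]. }
      nra. }
  destruct k; [exact H0|].
  set (c1 := fun k => c (S k)).
  assert (Hc1 : Conv c1).
  { intros x Hx. destruct (Hc x Hx) as [s Hs].
    assert (E1 : ex_series (fun k => (c (S k) * RtoC x ^ (S k))%C)).
    { apply (ex_series_incr_1 (fun k => (c k * RtoC x ^ k)%C)). eexists; exact Hs. }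
    apply (ex_series_scal_l (K := C_AbsRing) (V := C_NormedModule) (/ RtoC x)%C) in E1.
    eapply ex_series_ext; [|exact E1]. intros k0. unfold c1. change (/ RtoC x * (c (S k0) * RtoC x ^ S k0) = c (S k0) * RtoC x ^ k0)%C.
    simpl Cpow. field. apply RtoC_neq0. lra. }
  apply (IHK c1 Hc1); [|lia].
  exists C0, d. split; auto. intros t s1 Ht Hs1.
  assert (Hs : is_series (fun k => (c k * RtoC t ^ k)%C) (RtoC t * s1)%C).
  { apply (is_series_decr_1 (fun k => (c k * RtoC t ^ k)%C)).
    apply (is_series_scal_l (K := C_AbsRing) (V := C_NormedModule) (RtoC t)) in Hs1.
    assert (Ev : plus (RtoC t * s1)%C (opp (c 0%nat * RtoC t ^ 0)%C) = scal (RtoC t) s1).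
    { rewrite H0. change (RtoC t * s1 + - (0 * 1) = RtoC t * s1)%C. ring. }
    match goal with |- is_series _ ?v => replace v with (scal (RtoC t) s1) end.
    eapply is_series_ext; [|exact Hs1].
    intros k0. unfold c1. change (RtoC t * (c (S k0) * RtoC t ^ k0) = c (S k0) * RtoC t ^ S k0)%C. simpl Cpow. ring.
    }
  pose proof (HB t _ Ht Hs) as Hb. rewrite Cmod_mult, Cmod_R, Rabs_pos_eq in Hb by lra.
  simpl pow in Hb. apply Rmult_le_reg_l with t; [lra|]. lra.
Qed.


Definition BigO (F : R -> C) (K : nat) :=
  exists C0 d, 0 < d /\ forall t, 0 < t < d -> Cmod (F t) <= C0 * t ^ K.

Lemma BigO_ext F G K : (exists d, 0 < d /\ forall t, 0 < t < d -> F t = G t) -> BigO G K -> BigO F K.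
Proof.
  intros [d1 [Hd1 HE]] [C0 [d [Hd HB]]]. exists C0, (Rmin d d1). split; [apply Rmin_pos; auto|].
  intros t Ht. pose proof (Rmin_l d d1). pose proof (Rmin_r d d1). rewrite HE by lra. apply HB. lra.
Qed.

Lemma BigO_nonneg F K : BigO F K -> exists C0 d, 0 < d /\ 0 <= C0 /\ forall t, 0 < t < d -> Cmod (F t) <= C0 * t ^ K.
Proof.
  intros [C0 [d [Hd HB]]]. exists (Rabs C0), d. split; auto. split; [apply Rabs_pos|].
  intros t Ht. eapply Rle_trans; [apply HB; auto|]. apply Rmult_le_compat_r; [apply pow_le; lra| apply Rle_abs].
Qed.

Lemma BigO_plus F G K : BigO F K -> BigO G K -> BigO (fun t => F t + G t)%C K.
Proof.
  intros [C1 [d1 [Hd1 H1]]] [C2 [d2 [Hd2 H2]]]. exists (C1 + C2), (Rmin d1 d2). split; [apply Rmin_pos; auto|].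
  intros t Ht. pose proof (Rmin_l d1 d2). pose proof (Rmin_r d1 d2).
  eapply Rle_trans; [apply Cmod_triangle|]. specialize (H1 t ltac:(lra)). specialize (H2 t ltac:(lra)). lra.
Qed.

Lemma BigO_scal a F K : BigO F K -> BigO (fun t => a * F t)%C K.
Proof.
  intros H. destruct (BigO_nonneg _ _ H) as [C0 [d [Hd [HC HB]]]]. exists (Cmod a * C0), d. split; auto.
  intros t Ht. rewrite Cmod_mult. rewrite Rmult_assoc. apply Rmult_le_compat_l; [apply Cmod_ge_0| auto].
Qed.

Lemma BigO_mult F G K1 K2 : BigO F K1 -> BigO G K2 -> BigO (fun t => F t * G t)%C (K1 + K2).
Proof.
  intros H1 H2. destruct (BigO_nonneg _ _ H1) as [C1 [d1 [Hd1 [HC1 B1]]]].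
  destruct (BigO_nonneg _ _ H2) as [C2 [d2 [Hd2 [HC2 B2]]]].
  exists (C1 * C2), (Rmin d1 d2). split; [apply Rmin_pos; auto|].
  intros t Ht. pose proof (Rmin_l d1 d2). pose proof (Rmin_r d1 d2).
  rewrite Cmod_mult, pow_add.
  replace (C1 * C2 * (t ^ K1 * t ^ K2)) with ((C1 * t ^ K1) * (C2 * t ^ K2)) by ring.
  apply Rmult_le_compat; try apply Cmod_ge_0; [apply B1|apply B2]; lra.
Qed.

Lemma BigO_weak F K1 K2 : (K2 <= K1)%nat -> BigO F K1 -> BigO F K2.
Proof.
  intros Hk H. destruct (BigO_nonneg _ _ H) as [C0 [d [Hd [HC HB]]]].
  exists C0, (Rmin d 1). split; [apply Rmin_pos; lra|].
  intros t Ht. pose proof (Rmin_l d 1). pose proof (Rmin_r d 1).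
  eapply Rle_trans; [apply HB; lra|]. apply Rmult_le_compat_l; auto. apply pow_decr; auto; lra.
Qed.

Lemma BigO_tpow K : BigO (fun t => RtoC t ^ K)%C K.
Proof.
  exists 1, 1. split; [lra|]. intros t Ht. rewrite Cmod_pow, Cmod_R, Rabs_pos_eq by lra. lra.
Qed.

Lemma BigO_pow F K j : BigO F K -> BigO (fun t => F t ^ j)%C (K * j).
Proof.
  intros H. induction j.
  - exists 1, 1. split; [lra|]. intros t Ht. simpl. rewrite Nat.mul_0_r, Cmod_1. simpl. lra.
  - replace (K * S j)%nat with (K + K * j)%nat by lia. simpl Cpow. apply BigO_mult; auto.
Qed.

Lemma BigO_le F G K : (exists d A, 0 < d /\ forall t, 0 < t < d -> Cmod (F t) <= A * Cmod (G t)) ->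
  BigO G K -> BigO F K.
Proof.
  intros [d1 [A [Hd1 HA]]] H. destruct (BigO_nonneg _ _ H) as [C0 [d [Hd [HC HB]]]].
  exists (Rabs A * C0), (Rmin d d1). split; [apply Rmin_pos; auto|].
  intros t Ht. pose proof (Rmin_l d d1). pose proof (Rmin_r d d1).
  eapply Rle_trans; [apply HA; lra|]. eapply Rle_trans.
  - apply Rmult_le_compat_r; [apply Cmod_ge_0| apply Rle_abs].
  - rewrite Rmult_assoc. apply Rmult_le_compat_l; [apply Rabs_pos| apply HB; lra].
Qed.

Lemma BigO_comp (H : C -> C) G K :
  (exists Ch dh, 0 < dh /\ forall z, Cmod z <= dh -> Cmod (H z) <= Ch * Cmod z ^ K) ->
  BigO G 1 -> BigO (fun t => H (G t)) K.
Proof.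
  intros [Ch [dh [Hdh HH]]] HG. destruct (BigO_nonneg _ _ HG) as [Cg [dg [Hdg [HCg HB]]]].
  exists (Rabs Ch * Cg ^ K), (Rmin dg (Rmin 1 (dh / (Cg + 1)))).
  split. { apply Rmin_pos; auto. apply Rmin_pos; [lra|]. apply Rmult_lt_0_compat; [lra| apply Rinv_0_lt_compat; lra]. }
  intros t Ht. pose proof (Rmin_l dg (Rmin 1 (dh / (Cg + 1)))). pose proof (Rmin_r dg (Rmin 1 (dh / (Cg + 1)))).
  pose proof (Rmin_l 1 (dh / (Cg + 1))). pose proof (Rmin_r 1 (dh / (Cg + 1))).
  specialize (HB t ltac:(lra)). simpl pow in HB. rewrite Rmult_1_r in HB.
  assert (Cg * t <= dh).
  { apply Rle_trans with (Cg * (dh / (Cg + 1))). apply Rmult_le_compat_l; lra.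
    apply Rmult_le_reg_r with (Cg + 1); [lra|]. replace (Cg * (dh / (Cg + 1)) * (Cg + 1)) with (Cg * dh) by (field; lra). nra. }
  eapply Rle_trans; [apply HH; lra|].
  eapply Rle_trans. apply Rmult_le_compat_r; [apply pow_le, Cmod_ge_0| apply Rle_abs].
  rewrite Rmult_assoc, <- Rpow_mult_distr. apply Rmult_le_compat_l; [apply Rabs_pos|].
  apply pow_incr. split; [apply Cmod_ge_0| auto].
Qed.

Lemma Dpow_id (Y u : C) j :
  ((Y + u) ^ (S j) - Y ^ (S j) - RtoC (INR (S j)) * Y ^ j * u =
   (Y + u) * ((Y + u) ^ j - Y ^ j - RtoC (INR j) * Y ^ (j - 1) * u) + RtoC (INR j) * Y ^ (j - 1) * (u * u))%C.
Proof.
  destruct j.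
  - simpl. ring.
  - rewrite Nat.sub_succ, Nat.sub_0_r. rewrite (S_INR (S j)), RtoC_plus. simpl Cpow. ring.
Qed.

Lemma Dpow (Y u : C) (M : R) j : 1 <= M -> Cmod Y <= M -> Cmod (Y + u) <= M ->
  Cmod ((Y + u) ^ j - Y ^ j - RtoC (INR j) * Y ^ (j - 1) * u)%C <= INR j * INR j * M ^ j * Cmod u ^ 2.
Proof.
  intros HM HY HYu. induction j.
  - simpl. replace (1 - 1 - RtoC 0 * 1 * u)%C with (RtoC 0) by ring.
    rewrite Cmod_0. lra.
  - replace (S j - 1)%nat with j by lia. rewrite Dpow_id. eapply Rle_trans; [apply Cmod_triangle|].
    rewrite !Cmod_mult, Cmod_R, Rabs_pos_eq, Cmod_pow by apply pos_INR.
    assert (HYj : Cmod Y ^ (j - 1) <= M ^ S j).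
    { eapply Rle_trans. apply pow_incr. split; [apply Cmod_ge_0| exact HY]. apply Rle_pow; auto. lia. }
    assert (0 <= Cmod u) by apply Cmod_ge_0.
    assert (0 <= Cmod (Y + u)) by apply Cmod_ge_0.
    pose proof (pos_INR j). assert (0 <= Cmod Y ^ (j - 1)) by (apply pow_le, Cmod_ge_0).
    assert (0 <= M ^ j) by (apply pow_le; lra).
    assert (A1 : Cmod (Y + u) * Cmod ((Y + u) ^ j - Y ^ j - RtoC (INR j) * Y ^ (j - 1) * u)%C <= M * (INR j * INR j * M ^ j * Cmod u ^ 2)).
    { apply Rmult_le_compat; auto. apply Cmod_ge_0. }
    assert (A2 : INR j * Cmod Y ^ (j - 1) * (Cmod u * Cmod u) <= INR j * M ^ S j * (Cmod u * Cmod u)).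
    { apply Rmult_le_compat_r; [nra|]. apply Rmult_le_compat_l; auto. }
    rewrite S_INR. simpl pow in *. set (Q := M * M ^ j * (Cmod u * (Cmod u * 1))).
    assert (0 <= Q) by (unfold Q; assert (0 <= M * M ^ j) by nra; nra).
    replace (M * (INR j * INR j * M ^ j * (Cmod u * (Cmod u * 1)))) with (INR j * INR j * Q) in A1 by (unfold Q; ring).
    replace (INR j * (M * M ^ j) * (Cmod u * Cmod u)) with (INR j * Q) in A2 by (unfold Q; ring).
    replace ((INR j + 1) * (INR j + 1) * (M * M ^ j) * (Cmod u * (Cmod u * 1))) with ((INR j + 1) * (INR j + 1) * Q) by (unfold Q; ring).
    nra.
Qed.


Lemma rusch0 m n : rusch_mult m 0 n = 1.
Proof.
  unfold rusch_mult. simpl Nat.add. simpl (fact 0). simpl INR at 3.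
  field. apply INR_fact_neq_0.
Qed.

Lemma J_re m c z : Re (J m 1%C 1%C 0%C 0 c z) =
  Series (fun k => Re (RtoC (INR (S k)) * c (S k) * z ^ k)%C).
Proof.
  assert (Hg : forall S0 S1 S2 : C, (1 + / 1 * ((1 - 1) * (1 - 0) * S0 + (1 * (0 + 1) + 0) * S1 + 1 * 0 * (S2 - 2) - 1))%C = S1).
  { intros. field. }
  unfold J. cbv zeta. rewrite Hg. unfold CSeries, Re. cbn [fst].
  rewrite Series_incr_1_aux.
  - apply Series_ext. intros k. unfold rusch_coeffs. rewrite rusch0.
    replace (S k - 1)%nat with k by lia.
    replace (RtoC 1 * c (S k))%C with (c (S k)) by ring. reflexivity.
  - simpl. ring.
Qed.

Lemma ser_at0 (c : nat -> C) s : is_series (fun k => (c k * RtoC 0 ^ k)%C) s -> s = c 0%nat.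
Proof.
  intros H. apply (is_series_C_unique _ _ _ H).
  eapply is_series_ext; [|apply (is_series_spk (V := C_NormedModule) 0 (c 0%nat))].
  intros k. unfold spk. destruct k; simpl.
  - change (c 0%nat = c 0%nat * 1)%C. ring.
  - change (RtoC 0 = c (S k) * (RtoC 0 * RtoC 0 ^ k))%C. ring.
Qed.

Lemma series_diff (c d : nat -> C) z s s' :
  is_series (fun k => (c k * z ^ k)%C) s -> is_series (fun k => (d k * z ^ k)%C) s' ->
  is_series (fun k => ((c k - d k) * z ^ k)%C) (s - s')%C.
Proof.
  intros H1 H2. eapply is_series_ext; [|apply (is_series_minus _ _ _ _ H1 H2)].
  intros k. change (c k * z ^ k + - (d k * z ^ k) = (c k - d k) * z ^ k)%C. ring.
Qed.

Definition spk1 (i : nat) (v : C) (k : nat) : C := if Nat.eqb k i then v else RtoC 0.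

Lemma spk1_series i v z : is_series (fun k => (spk1 i v k * z ^ k)%C) (v * z ^ i)%C.
Proof.
  eapply is_series_ext; [|apply (is_series_spk (V := C_NormedModule) i (v * z ^ i)%C)].
  intros k. unfold spk, spk1. destruct (Nat.eqb_spec k i).
  - subst. reflexivity.
  - change (RtoC 0 = 0 * z ^ k)%C. ring.
Qed.

Definition spk3 (m : nat) (v1 v2 v3 : C) (k : nat) : C :=
  (spk1 1 v1 k + spk1 (S m) v2 k + spk1 (S (2 * m)) v3 k)%C.

Lemma spk3_series m v1 v2 v3 z :
  is_series (fun k => (spk3 m v1 v2 v3 k * z ^ k)%C) (v1 * z + v2 * z ^ (S m) + v3 * z ^ (S (2 * m)))%C.
Proof.
  pose proof (is_series_plus _ _ _ _ (is_series_plus _ _ _ _ (spk1_series 1 v1 z) (spk1_series (S m) v2 z)) (spk1_series (S (2 * m)) v3 z)) as H.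
  replace (v1 * z + v2 * z ^ (S m) + v3 * z ^ (S (2 * m)))%C with (plus (plus (v1 * z ^ 1) (v2 * z ^ S m)) (v3 * z ^ S (2 * m)))%C.
  - eapply is_series_ext; [|exact H]. intros k. unfold spk3. change ((spk1 1 v1 k * z ^ k + spk1 (S m) v2 k * z ^ k) + spk1 (S (2 * m)) v3 k * z ^ k = (spk1 1 v1 k + spk1 (S m) v2 k + spk1 (S (2 * m)) v3 k) * z ^ k)%C. ring.
  - change ((v1 * z ^ 1 + v2 * z ^ S m) + v3 * z ^ S (2 * m) = v1 * z + v2 * z ^ S m + v3 * z ^ S (2 * m))%C. simpl (z ^ 1)%C. ring.
Qed.

Lemma spk3_val m v1 v2 v3 k : (1 <= m)%nat ->
  spk3 m v1 v2 v3 k = if Nat.eqb k 1 then v1 else if Nat.eqb k (S m) then v2 else if Nat.eqb k (S (2 * m)) then v3 else RtoC 0.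
Proof.
  intros Hm. unfold spk3, spk1.
  destruct (Nat.eqb_spec k 1); destruct (Nat.eqb_spec k (S m)); destruct (Nat.eqb_spec k (S (2 * m))); try lia; ring.
Qed.

Lemma Cpow_add (z : C) i j : (z ^ (i + j) = z ^ i * z ^ j)%C.
Proof. induction i; simpl. ring. rewrite IHi. ring. Qed.

Lemma carath_apply (c : nat -> C) beta m n : Conv c ->
  (forall z, in_U z -> beta < Re (J m 1%C 1%C 0%C 0 c z)) -> (1 <= n)%nat ->
  Cmod (RtoC (INR (S n)) * c (S n))%C <= 2 * (Re (RtoC (INR 1) * c 1%nat)%C - beta).
Proof.
  intros Hc HJ Hn.
  apply (carath (fun k => RtoC (INR (S k)) * c (S k))%C beta n Hn).
  - intros r Hr. apply deriv_geom; auto.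
  - intros z Hz. rewrite <- (J_re m). apply HJ. exact Hz.
Qed.


Lemma inU_R t : 0 <= t < 1 -> in_U (RtoC t).
Proof. intros. unfold in_U. rewrite Cmod_R, Rabs_pos_eq; lra. Qed.

Lemma conv_of (h : C -> C) c : has_expansion h c -> Conv c.
Proof. intros H x Hx. exists (h (RtoC x)). apply H. apply inU_R. lra. Qed.

Lemma inverse_coeffs m (f g : C -> C) (a b : nat -> C) :
  (1 <= m)%nat -> mfold_coeffs m a -> has_expansion f a -> univalent_U f ->
  has_expansion g b -> inverse_near0 f g ->
  b 1%nat = 1%C /\ b (S (2*m)) = (RtoC (INR (S m)) * a (S m) * a (S m) - a (S (2*m)))%C.
Proof.
  intros Hm [Ha1 Ha0] Hfa Hfu Hgb [r0 [Hr0 Hinv]].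
  assert (HA : Conv a) by (eapply conv_of; eauto).
  assert (HB : Conv b) by (eapply conv_of; eauto).
  assert (in0 : in_U (RtoC 0)) by (apply inU_R; lra).
  assert (a0 : a 0%nat = RtoC 0) by (apply Ha0; intros k; lia).
  assert (f0 : f (RtoC 0) = a 0%nat) by (apply ser_at0; apply Hfa; auto).
  rewrite a0 in f0.
  assert (g0 : g (RtoC 0) = RtoC 0).
  { destruct (Hinv (RtoC 0) ltac:(rewrite Cmod_R, Rabs_R0; lra)) as [Hu Hf]. apply Hfu; auto. rewrite Hf, f0. reflexivity. }
  assert (b0' : g (RtoC 0) = b 0%nat) by (apply ser_at0; apply Hgb; auto).
  assert (b0 : b 0%nat = RtoC 0) by congruence.
  set (Rf := fun z => (f z - (1 * z + a (S m) * z ^ (S m) + a (S (2*m)) * z ^ (S (2*m))))%C).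
  set (ca := fun k => (a k - spk3 m 1 (a (S m)) (a (S (2*m))) k)%C).
  assert (Hca_ser : forall z, in_U z -> is_series (fun k => (ca k * z ^ k)%C) (Rf z)).
  { intros z Hz. apply series_diff; [apply Hfa; auto| apply spk3_series]. }
  assert (Hca : Conv ca) by (intros x Hx; eexists; apply Hca_ser; apply inU_R; lra).
  assert (Hca0 : forall k, (k < 3 * m + 1)%nat -> ca k = 0%C).
  { intros k Hk. unfold ca. rewrite spk3_val by auto.
    destruct (Nat.eqb_spec k 1); [subst; rewrite Ha1; ring|].
    destruct (Nat.eqb_spec k (S m)); [subst; ring|].
    destruct (Nat.eqb_spec k (S (2*m))); [subst; ring|].
    rewrite Ha0; [ring|]. intros q Hq. destruct q as [|[|[|q]]]; nia. }
  destruct (TK ca (3*m+1) Hca Hca0) as [Cr [dr [Hdr [HCr HTr]]]].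
  assert (HRf : exists Ch dh, 0 < dh /\ forall z, Cmod z <= dh -> Cmod (Rf z) <= Ch * Cmod z ^ (3*m+1)).
  { exists Cr, (Rmin dr (1/2)). split; [apply Rmin_pos; lra|]. intros z Hz.
    pose proof (Rmin_l dr (1/2)). pose proof (Rmin_r dr (1/2)).
    apply (HTr z); [lra|]. apply Hca_ser. unfold in_U. lra. }
  set (G := fun t => g (RtoC t)).
  assert (H1 : BigO G 1).
  { destruct (TK b 1 HB ltac:(intros k Hk; assert (k = 0%nat) by lia; subst; exact b0)) as [Cg [dg [Hdg [HCg HTg]]]].
    exists Cg, (Rmin dg (1/2)). split; [apply Rmin_pos; lra|]. intros t Ht.
    pose proof (Rmin_l dg (1/2)). pose proof (Rmin_r dg (1/2)).
    assert (Ct : Cmod (RtoC t) = t) by (rewrite Cmod_R, Rabs_pos_eq; lra).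
    pose proof (HTg (RtoC t) (g (RtoC t)) ltac:(lra) (Hgb _ (inU_R t ltac:(lra)))) as X.
    rewrite Ct in X. exact X. }
  assert (HRG : BigO (fun t => Rf (G t)) (3*m+1)) by (apply BigO_comp; auto).
  assert (H3 : forall t, 0 < t < r0 -> f (G t) = RtoC t).
  { intros t Ht. unfold G. apply Hinv. rewrite Cmod_R, Rabs_pos_eq; lra. }
  set (u := fun t => (G t - RtoC t)%C).
  assert (H4 : BigO u (S m)).
  { eapply BigO_ext.
    { exists r0. split; [exact Hr0|]. intros t Ht.
      instantiate (1 := fun t => (- a (S m) * G t ^ (S m) + - a (S (2*m)) * G t ^ (S (2*m)) + (- (1)) * Rf (G t))%C).
      cbv beta. unfold u, Rf. rewrite H3 by auto. ring. }
    apply BigO_plus; [apply BigO_plus|].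
    - apply BigO_scal. apply (BigO_weak _ (1 * S m)); [lia|]. apply BigO_pow. exact H1.
    - apply BigO_scal. apply (BigO_weak _ (1 * S (2*m))); [lia|]. apply BigO_pow. exact H1.
    - apply BigO_scal. apply (BigO_weak _ (3*m+1)); [lia|]. exact HRG. }
  destruct (BigO_nonneg _ _ H1) as [Cg [dg [Hdg [HCg HBg]]]].
  set (M := 1 + Cg).
  assert (HD : forall j, BigO (fun t => (G t ^ j - RtoC t ^ j - RtoC (INR j) * RtoC t ^ (j - 1) * u t)%C) (S m + S m)).
  { intros j. apply (BigO_le _ (fun t => (u t * u t)%C)); [|apply BigO_mult; exact H4].
    exists (Rmin dg 1), (INR j * INR j * M ^ j). split; [apply Rmin_pos; lra|]. intros t Ht.
    pose proof (Rmin_l dg 1). pose proof (Rmin_r dg 1).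
    assert (E : G t = (RtoC t + u t)%C) by (unfold u; ring).
    rewrite E. rewrite Cmod_mult.
    replace (INR j * INR j * M ^ j * (Cmod (u t) * Cmod (u t))) with (INR j * INR j * M ^ j * Cmod (u t) ^ 2) by ring.
    apply Dpow.
    - unfold M; lra.
    - rewrite Cmod_R, Rabs_pos_eq; unfold M; lra.
    - rewrite <- E. specialize (HBg t ltac:(lra)). simpl pow in HBg. unfold M. nra. }
  assert (H7 : BigO (fun t => (G t ^ S (2*m) - RtoC t ^ S (2*m))%C) (S m + S m)).
  { eapply BigO_ext.
    { exists 1. split; [lra|]. intros t Ht.
      instantiate (1 := fun t => ((G t ^ S (2*m) - RtoC t ^ S (2*m) - RtoC (INR (S (2*m))) * RtoC t ^ (S (2*m) - 1) * u t)
                                 + (RtoC (INR (S (2*m))) * RtoC t ^ (S (2*m) - 1)) * u t)%C).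
      cbv beta. ring. }
    apply BigO_plus; [apply HD|].
    apply (BigO_weak _ ((S (2*m) - 1) + S m)); [lia|]. apply BigO_mult; [|exact H4].
    apply BigO_scal. apply BigO_tpow. }
  assert (H8 : BigO (fun t => (G t ^ S m - RtoC t ^ S m)%C) (S m + m)).
  { eapply BigO_ext.
    { exists 1. split; [lra|]. intros t Ht.
      instantiate (1 := fun t => ((G t ^ S m - RtoC t ^ S m - RtoC (INR (S m)) * RtoC t ^ (S m - 1) * u t)
                                 + (RtoC (INR (S m)) * RtoC t ^ (S m - 1)) * u t)%C).
      cbv beta. ring. }
    apply BigO_plus; [apply (BigO_weak _ (S m + S m)); [lia| apply HD]|].
    apply (BigO_weak _ ((S m - 1) + S m)); [lia|]. apply BigO_mult; [|exact H4].
    apply BigO_scal. apply BigO_tpow. }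
  set (V := fun t => (RtoC t ^ (S m - 1) * u t + a (S m) * (RtoC t ^ (S m - 1) * RtoC t ^ S m))%C).
  assert (H9 : BigO V (S m + S m)).
  { eapply BigO_ext.
    { exists r0. split; [exact Hr0|]. intros t Ht.
      instantiate (1 := fun t => (- a (S m) * (RtoC t ^ (S m - 1) * (G t ^ S m - RtoC t ^ S m))
          + - a (S (2*m)) * (RtoC t ^ (S m - 1) * G t ^ S (2*m)) + (- (1)) * (RtoC t ^ (S m - 1) * Rf (G t)))%C).
      cbv beta. unfold V, u, Rf. rewrite H3 by auto. ring. }
    apply BigO_plus; [apply BigO_plus|]; apply BigO_scal.
    - apply (BigO_weak _ ((S m - 1) + (S m + m))); [lia|]. apply BigO_mult; [apply BigO_tpow| exact H8].
    - apply (BigO_weak _ ((S m - 1) + 1 * S (2*m))); [lia|]. apply BigO_mult; [apply BigO_tpow| apply BigO_pow; exact H1].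
    - apply (BigO_weak _ ((S m - 1) + (3*m+1))); [lia|]. apply BigO_mult; [apply BigO_tpow| exact HRG]. }
  set (c3 := (RtoC (INR (S m)) * a (S m) * a (S m) - a (S (2*m)))%C).
  set (E := fun t => (G t - (1 * RtoC t + - a (S m) * RtoC t ^ S m + c3 * RtoC t ^ S (2*m)))%C).
  assert (H10 : BigO E (S m + S m)).
  { eapply BigO_ext.
    { exists r0. split; [exact Hr0|]. intros t Ht.
      instantiate (1 := fun t => (- a (S m) * RtoC (INR (S m)) * V t
          + - a (S m) * (G t ^ S m - RtoC t ^ S m - RtoC (INR (S m)) * RtoC t ^ (S m - 1) * u t)
          + - a (S (2*m)) * (G t ^ S (2*m) - RtoC t ^ S (2*m)) + (- (1)) * Rf (G t))%C).
      cbv beta.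
      assert (Et : (RtoC t ^ S (2*m) = RtoC t ^ (S m - 1) * RtoC t ^ S m)%C).
      { rewrite <- Cpow_add. f_equal. lia. }
      unfold E, V, u, c3. rewrite Et. unfold Rf. rewrite H3 by auto. ring. }
    apply BigO_plus; [apply BigO_plus; [apply BigO_plus|]|]; apply BigO_scal.
    - exact H9.
    - apply HD.
    - exact H7.
    - apply (BigO_weak _ (3*m+1)); [lia|]. exact HRG. }
  set (cb := fun k => (b k - spk3 m 1 (- a (S m)) c3 k)%C).
  assert (Hcb_ser : forall z, in_U z -> is_series (fun k => (cb k * z ^ k)%C) (g z - (1 * z + - a (S m) * z ^ S m + c3 * z ^ S (2*m)))%C).
  { intros z Hz. apply series_diff; [apply Hgb; auto| apply spk3_series]. }
  assert (Hcb : Conv cb) by (intros x Hx; eexists; apply Hcb_ser; apply inU_R; lra).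
  assert (HU : forall k, (k < S m + S m)%nat -> cb k = 0%C).
  { apply UQ; auto. destruct H10 as [C0 [d [Hd HBd]]].
    exists C0, (Rmin d 1). split; [apply Rmin_pos; lra|]. intros t s Ht Hs.
    pose proof (Rmin_l d 1). pose proof (Rmin_r d 1).
    assert (Es : s = E t) by (apply (is_series_C_unique _ _ _ Hs); apply Hcb_ser; apply inU_R; lra).
    rewrite Es. apply HBd. lra. }
  pose proof (HU 1%nat ltac:(lia)) as U1. pose proof (HU (S (2*m)) ltac:(lia)) as U2.
  unfold cb in U1, U2. rewrite spk3_val in U1, U2 by auto.
  destruct (Nat.eqb_spec 1 1); [|lia].
  destruct (Nat.eqb_spec (S (2*m)) 1); [lia|]. destruct (Nat.eqb_spec (S (2*m)) (S m)); [lia|].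
  destruct (Nat.eqb_spec (S (2*m)) (S (2*m))); [|lia].
  split.
  - replace (b 1%nat) with ((b 1%nat - 1) + 1)%C by ring. rewrite U1. ring.
  - replace (b (S (2*m))) with ((b (S (2*m)) - c3) + c3)%C by ring. rewrite U2. unfold c3. ring.
Qed.

Theorem corollary4 (m : nat) (beta : R) (f : C -> C) (a : nat -> C) :
  (1 <= m)%nat -> 0 <= beta < 1 ->
  Theta m 1%C 1%C 0%C 0%nat beta f a ->
  Cmod (a (m + 1)%nat) <=
    Rmin (2 * (1 - beta) / (1 + INR m))
         (2 * sqrt ((1 - beta) / ((INR m + 1) * (1 + 2 * INR m)))) /\
  Cmod (a (2 * m + 1)%nat) <= 2 * (1 - beta) / (1 + 2 * INR m).
Proof.
  intros Hm Hbeta [[HmA Hfa] [Hfu [HJf [g [b [Hgb [Hgu [Hinv HJg]]]]]]]].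
  destruct (inverse_coeffs m f g a b Hm HmA Hfa Hfu Hgb Hinv) as [Hb1 Hb2].
  destruct HmA as [Ha1 _].
  assert (HA : Conv a) by (eapply conv_of; eauto).
  assert (HB : Conv b) by (eapply conv_of; eauto).
  pose proof (carath_apply a beta m m HA HJf Hm) as A1.
  pose proof (carath_apply a beta m (2*m) HA HJf ltac:(lia)) as A2.
  pose proof (carath_apply b beta m (2*m) HB HJg ltac:(lia)) as B2.
  assert (E1 : forall v : C, v = 1%C -> Re (RtoC (INR 1) * v)%C = 1).
  { intros v ->. simpl INR. unfold Re, Cmult, RtoC. simpl. ring. }
  rewrite (E1 _ Ha1) in A1, A2. rewrite (E1 _ Hb1) in B2.
  rewrite Cmod_mult, Cmod_R, Rabs_pos_eq in A1, A2, B2 by apply pos_INR.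
  assert (Hm0 : 0 <= INR m) by apply pos_INR.
  assert (ISm : INR (S m) = INR m + 1) by apply S_INR.
  assert (IS2m : INR (S (2 * m)) = 1 + 2 * INR m) by (rewrite S_INR, mult_INR; simpl; ring).
  rewrite ISm in A1. rewrite IS2m in A2, B2.
  replace (m + 1)%nat with (S m) by lia. replace (2 * m + 1)%nat with (S (2 * m)) by lia.
  set (A := Cmod (a (S m))) in *. assert (HA0 : 0 <= A) by apply Cmod_ge_0.
  split.
  - apply Rmin_glb.
    + apply (Rmult_le_reg_r (1 + INR m)); [lra|].
      replace (2 * (1 - beta) / (1 + INR m) * (1 + INR m)) with (2 * (1 - beta)) by (field; lra). lra.
    + assert (Hid : (RtoC (INR (S (2*m))) * b (S (2*m)) + RtoC (INR (S (2*m))) * a (S (2*m)))%C =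
                    (RtoC (INR (S (2*m))) * RtoC (INR (S m)) * (a (S m) * a (S m)))%C).
      { rewrite Hb2. ring. }
      assert (HC : Cmod (RtoC (INR (S (2*m))) * RtoC (INR (S m)) * (a (S m) * a (S m)))%C <= 4 * (1 - beta)).
      { rewrite <- Hid. eapply Rle_trans; [apply Cmod_triangle|].
        rewrite !Cmod_mult, !Cmod_R, !Rabs_pos_eq by apply pos_INR. rewrite IS2m. lra. }
      rewrite !Cmod_mult, !Cmod_R, !Rabs_pos_eq in HC by apply pos_INR.
      rewrite IS2m, ISm in HC. fold A in HC.
      set (X := (1 - beta) / ((INR m + 1) * (1 + 2 * INR m))).
      assert (HX : A * A <= 4 * X).
      { unfold X. apply (Rmult_le_reg_r ((INR m + 1) * (1 + 2 * INR m))); [nra|].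
        replace (4 * ((1 - beta) / ((INR m + 1) * (1 + 2 * INR m))) * ((INR m + 1) * (1 + 2 * INR m))) with (4 * (1 - beta)) by (field; nra).
        nra. }
      assert (HX0 : 0 <= X).
      { unfold X. apply Rmult_le_pos; [lra|]. apply Rlt_le, Rinv_0_lt_compat. nra. }
      rewrite <- (sqrt_square A HA0).
      replace (2 * sqrt X) with (sqrt (4 * X)).
      * apply sqrt_le_1_alt. exact HX.
      * rewrite sqrt_mult by lra. replace 4 with (2 * 2) by ring. rewrite sqrt_square by lra. reflexivity.
  - apply (Rmult_le_reg_r (1 + 2 * INR m)); [lra|].
    replace (2 * (1 - beta) / (1 + 2 * INR m) * (1 + 2 * INR m)) with (2 * (1 - beta)) by (field; lra). lra.
Qed.
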